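(* Let $n$ be a fixed positive integer and, for $k\ge0$, let \[ C_k=\sum_{j=0}^{n-1}\frac{n^j}{j!}+\frac{n^{n-1}}{(n-1)!}\left(1+n+\cfrac{a_1}{b_1+\cfrac{a_2}{\ddots+\cfrac{a_k}{b_k}}}\right),\qquad a_m=-n(m+n-1),\ b_m=m+2n+1, \] (with the continued fraction term equal to $0$ when $k=0$). Then, as $k\to\infty$, \[ \left|e^n-C_k\right|=O\left(\frac{n^{k+1}}{(k+1)(k+2)\,(n)_{k+2}}\right). \]
   Context: $(a)_0=1$ and $(a)_m=a(a+1)\cdots(a+m-1)$ denotes the Pochhammer symbol. *)

(* Defs.v *)
From Stdlib Require Import Reals Factorial.
Open Scope R_scope.

Fixpoint poch (a : R) (m : nat) : R :=
  match m with
  | O => 1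
  | S m' => poch a m' * (a + INR m')
  end.

Fixpoint cfrac (a b : nat -> R) (m len : nat) : R :=
  match len with
  | O => 0
  | S l => a m / (b m + cfrac a b (S m) l)
  end.

Definition a_coef (n : nat) (m : nat) : R := - INR n * INR (m + n - 1).
Definition b_coef (n : nat) (m : nat) : R := INR (m + 2 * n + 1).

Definition Capprox (n k : nat) : R :=
  sum_f_R0 (fun j => INR n ^ j / INR (fact j)) (n - 1)
  + INR n ^ (n - 1) / INR (fact (n - 1))
    * (1 + INR n + cfrac (a_coef n) (b_coef n) 1 k).

(* Main.v *)
Require Import Defs.
From Stdlib Require Import Reals Lra Lia Psatz Factorial.
Open Scope R_scope.

Fixpoint Qx (a b : nat -> R) (m L : nat) (y : R) : R :=
  match L with O => y | S l => a m / (b m + Qx a b (S m) l y) end.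

Lemma cfrac_Qx a b L : forall m, cfrac a b m L = Qx a b m L 0.
Proof. induction L; intros m; simpl; [reflexivity| now rewrite IHL]. Qed.

Lemma Qx_snoc a b L : forall m y,
  Qx a b m (S L) y = Qx a b m L (a (m+L)%nat / (b (m+L)%nat + y)).
Proof.
  induction L; intros m y.
  - simpl. now rewrite Nat.add_0_r.
  - change (Qx a b m (S (S L)) y) with (a m / (b m + Qx a b (S m) (S L) y)).
    rewrite IHL. simpl. now rewrite Nat.add_succ_r.
Qed.

Lemma poch_S a m : poch a (S m) = poch a m * (a + INR m).
Proof. reflexivity. Qed.

Lemma poch_pos a m : 0 < a -> 0 < poch a m.
Proof.
  intro Ha; induction m; simpl; [lra|].
  apply Rmult_lt_0_compat; [assumption|]. pose proof (pos_INR m); lra.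
Qed.

Lemma fact_poch a m : INR (fact (a+m)) = INR (fact a) * poch (INR a + 1) m.
Proof.
  induction m.
  - rewrite Nat.add_0_r; simpl; ring.
  - rewrite Nat.add_succ_r.
    change (fact (S (a+m))) with (S (a+m) * fact (a+m))%nat.
    rewrite mult_INR, IHm, poch_S, S_INR, plus_INR. ring.
Qed.

Lemma b_coef_eq n m : b_coef n m = INR m + 2 * INR n + 1.
Proof. unfold b_coef. rewrite !plus_INR, mult_INR. simpl. ring. Qed.

Lemma a_coef_eq n m : (1 <= m)%nat -> a_coef n m = - INR n * (INR m + INR n - 1).
Proof.
  intro H. unfold a_coef. rewrite minus_INR by lia. rewrite plus_INR. simpl. ring.
Qed.

Definition pp n k := poch (INR n + 1) k.
Definition Bc n k := (INR k + 1) * pp n k.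
Definition Pk n k := sum_f_R0 (fun i => INR n ^ i / pp n i) k.
Definition Ac n k := Bc n k * (Pk n k - 1 - INR n) + INR n ^ (S k).

Lemma pp_S n k : pp n (S k) = pp n k * (INR n + 1 + INR k).
Proof. reflexivity. Qed.
Lemma pp_pos n k : 0 < pp n k.
Proof. apply poch_pos. pose proof (pos_INR n); lra. Qed.
Lemma Pk_S n k : Pk n (S k) = Pk n k + INR n ^ (S k) / pp n (S k).
Proof. reflexivity. Qed.

Lemma Bc_rec n k : Bc n (S (S k)) =
  b_coef n (S (S k)) * Bc n (S k) + a_coef n (S (S k)) * Bc n k.
Proof.
  unfold Bc. rewrite (a_coef_eq n (S (S k))) by lia. rewrite b_coef_eq.
  rewrite !pp_S, !S_INR. ring.
Qed.

Lemma Ac_rec n k : Ac n (S (S k)) =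
  b_coef n (S (S k)) * Ac n (S k) + a_coef n (S (S k)) * Ac n k.
Proof.
  unfold Ac. rewrite Bc_rec. unfold Bc.
  rewrite (a_coef_eq n (S (S k))) by lia. rewrite b_coef_eq.
  rewrite !Pk_S, !pp_S, !S_INR.
  pose proof (pp_pos n k). pose proof (pos_INR n). pose proof (pos_INR k).
  simpl pow. field. repeat split; lra.
Qed.

Lemma Bc_gap n k : 0 < Bc n (S k) - INR n * Bc n k.
Proof.
  unfold Bc. rewrite pp_S, S_INR.
  pose proof (pp_pos n k). pose proof (pos_INR n). pose proof (pos_INR k).
  replace ((INR k + 1 + 1) * (pp n k * (INR n + 1 + INR k)) - INR n * ((INR k + 1) * pp n k))
    with (pp n k * (INR n + (INR k + 2) * (INR k + 1))) by ring.
  apply Rmult_lt_0_compat; nra.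
Qed.

Lemma Bc_pos n k : 0 < Bc n k.
Proof. unfold Bc. pose proof (pp_pos n k). pose proof (pos_INR k). nra. Qed.

Lemma conv n (hn : (0 < n)%nat) k : forall y, - INR n <= y <= 0 ->
  Qx (a_coef n) (b_coef n) 1 (S k) y = (Ac n (S k) + y * Ac n k) / (Bc n (S k) + y * Bc n k).
Proof.
  assert (HX : 1 <= INR n) by (apply (le_INR 1); lia).
  induction k; intros y Hy.
  - simpl Qx. rewrite (a_coef_eq n 1) by lia. rewrite b_coef_eq.
    unfold Ac, Bc, Pk, pp. simpl. field. lra.
  - rewrite Qx_snoc. simpl (1 + S k)%nat.
    pose proof (pos_INR k).
    assert (Hd : 0 < b_coef n (S (S k)) + y) by (rewrite b_coef_eq, !S_INR; lra).
    set (d := b_coef n (S (S k)) + y) in *.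
    set (a := a_coef n (S (S k))).
    assert (Ha : a = - INR n * (INR k + 1 + INR n)).
    { unfold a. rewrite a_coef_eq by lia. rewrite !S_INR. ring. }
    assert (Hd2 : d = INR k + 2 * INR n + 3 + y) by (unfold d; rewrite b_coef_eq, !S_INR; lra).
    assert (Hy' : - INR n <= a / d <= 0).
    { pose proof (Rinv_0_lt_compat d Hd). assert (/ d * d = 1) by (field; lra).
      unfold Rdiv. rewrite Ha. set (i := / d) in *.
      assert (0 <= INR n * (INR k + 1 + INR n)) by nra.
      split; [|nra].
      assert (0 <= i * (- INR n * (INR k + 1 + INR n) + INR n * d)) by (apply Rmult_le_pos; nra).
      nra. }
    rewrite (IHk _ Hy').
    rewrite Ac_rec, Bc_rec. fold a.
    replace (b_coef n (S (S k))) with (d - y) by (unfold d; ring).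
    pose proof (Bc_gap n k). pose proof (Bc_pos n k).
    assert (0 < Bc n (S k) + a / d * Bc n k) by nra.
    assert (0 < d * Bc n (S k) + a * Bc n k).
    { replace (d * Bc n (S k) + a * Bc n k) with (d * (Bc n (S k) + a / d * Bc n k)) by (field; lra).
      nra. }
    field. split; lra.
Qed.

Lemma cf_val n (hn : (0 < n)%nat) k :
  1 + INR n + cfrac (a_coef n) (b_coef n) 1 k = Pk n k + INR n ^ (S k) / Bc n k.
Proof.
  destruct k.
  - unfold Pk, Bc, pp. simpl. field.
  - rewrite cfrac_Qx. rewrite conv by (auto; pose proof (pos_INR n); lra).
    pose proof (Bc_pos n (S k)).
    unfold Ac. field. lra.
Qed.

Definition G n k := sum_f_R0 (fun j => INR n ^ j / INR (fact j)) (n + k)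
  + INR n ^ (n + k + 1) / ((INR k + 1) * INR (fact (n + k))).

Lemma sum_S f m : sum_f_R0 f (S m) = sum_f_R0 f m + f (S m).
Proof. reflexivity. Qed.

Lemma Capprox_G n (hn : (0 < n)%nat) k : Capprox n k = G n k.
Proof.
  unfold Capprox. rewrite cf_val by exact hn.
  destruct n as [|n']; [lia|].
  replace (S n' - 1)%nat with n' by lia.
  set (X := INR (S n')).
  assert (HX : 0 < X) by (unfold X; apply lt_0_INR; lia).
  assert (Hc : X ^ n' / INR (fact n') = X ^ S n' / INR (fact (S n'))).
  { change (fact (S n')) with (S n' * fact n')%nat. rewrite mult_INR. fold X.
    simpl pow. pose proof (INR_fact_neq_0 n'). field. split; lra. }
  rewrite Hc.
  assert (Ht : forall i, X ^ S n' / INR (fact (S n')) * (X ^ i / pp (S n') i)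
                = X ^ (S n' + i) / INR (fact (S n' + i))).
  { intro i. rewrite fact_poch, pow_add. fold X. unfold pp. fold X.
    pose proof (INR_fact_neq_0 (S n')). pose proof (poch_pos (X+1) i).
    field. split; lra. }
  assert (Hs : forall k, sum_f_R0 (fun j => X ^ j / INR (fact j)) (S n' + k)
      = sum_f_R0 (fun j => X ^ j / INR (fact j)) n' + X ^ S n' / INR (fact (S n')) * Pk (S n') k).
  { induction k0.
    - rewrite Nat.add_0_r. unfold Pk. cbn [sum_f_R0]. fold X.
      rewrite (Ht 0%nat). rewrite Nat.add_0_r. ring.
    - rewrite Nat.add_succ_r. rewrite (sum_S _ (S n' + k0)). rewrite IHk0, Pk_S.
      rewrite Rmult_plus_distr_l, Ht, Nat.add_succ_r. fold X. ring. }
  unfold G. fold X. rewrite Hs.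
  rewrite Rmult_plus_distr_l. rewrite Rplus_assoc. f_equal. f_equal.
  unfold Bc. rewrite fact_poch, !pow_add. fold X. unfold pp. fold X.
  pose proof (INR_fact_neq_0 (S n')). pose proof (poch_pos (X+1) k).
  pose proof (pos_INR k). simpl pow.
  field. repeat split; lra.
Qed.

Definition ee n j := INR n * (INR n + 1) * INR n ^ (n + j + 1)
  / ((INR j + 1) * (INR j + 2) * INR (fact (n + j + 1))).

Lemma ee_pos n j : 0 <= ee n j.
Proof.
  unfold ee. pose proof (pos_INR n). pose proof (pos_INR j).
  pose proof (INR_fact_lt_0 (n+j+1)). pose proof (pow_le (INR n) (n+j+1) H).
  apply Rmult_le_pos; [|apply Rlt_le, Rinv_0_lt_compat]; [|nra].
  apply Rmult_le_pos; nra.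
Qed.

Lemma step n (hn : (0 < n)%nat) j : 0 <= G n j - G n (S j) <= ee n j - ee n (S j).
Proof.
  unfold G, ee.
  replace (n + S j)%nat with (S (n + j)) by lia.
  rewrite (sum_S _ (n + j)).
  replace (S (n + j) + 1)%nat with (S (S (n + j))) by lia.
  replace (n + j + 1)%nat with (S (n + j)) by lia.
  set (N := (n + j)%nat).
  change (fact (S N)) with (S N * fact N)%nat.
  change (fact (S (S N))) with (S (S N) * (S N * fact N))%nat.
  rewrite !mult_INR. simpl pow.
  assert (HN : INR N = INR n + INR j) by (unfold N; apply plus_INR).
  rewrite !S_INR, HN.
  set (X := INR n). set (J := INR j). set (w := X ^ N). set (F := INR (fact N)).
  assert (HX : 1 <= X) by (unfold X; apply (le_INR 1); lia).
  assert (HJ : 0 <= J) by apply pos_INR.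
  assert (Hw : 0 < w) by (apply pow_lt; lra).
  assert (HF : 0 < F) by apply INR_fact_lt_0.
  set (D := X + J + 1).
  assert (HD : 0 < D) by (unfold D; lra).
  set (S0 := sum_f_R0 _ N).
  clearbody X J w F S0. unfold D in *. clear D.
  match goal with |- 0 <= ?A <= ?B =>
    assert (EA : A = w * X * X / (F * (X+J+1) * (J + 1) * (J + 2))) by (field; repeat split; lra);
    assert (EB : B - A = w * X * X / (F * (J+1) * (J+2) * (J+3) * (X+J+1) * (X+J+2))
                 * ((X+1)*(2*X+(J+2)*(J+3)) - (J+3)*(X+J+2))) by (field; repeat split; lra)
  end.
  assert (P1 : 0 <= w * X * X / (F * (X+J+1) * (J + 1) * (J + 2))).
  { apply Rmult_le_pos; [nra|]. apply Rlt_le, Rinv_0_lt_compat.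
    repeat apply Rmult_lt_0_compat; lra. }
  assert (P2 : 0 <= w * X * X / (F * (J+1) * (J+2) * (J+3) * (X+J+1) * (X+J+2))
                 * ((X+1)*(2*X+(J+2)*(J+3)) - (J+3)*(X+J+2))).
  { apply Rmult_le_pos.
    - apply Rmult_le_pos; [nra|]. apply Rlt_le, Rinv_0_lt_compat.
      repeat apply Rmult_lt_0_compat; lra.
    - nra. }
  lra.
Qed.

Lemma tele n (hn : (0 < n)%nat) k m : 0 <= G n k - G n (k + m) <= ee n k - ee n (k + m).
Proof.
  induction m.
  - rewrite Nat.add_0_r. lra.
  - rewrite Nat.add_succ_r. pose proof (step n hn (k + m)). lra.
Qed.

Lemma main_bound n (hn : (0 < n)%nat) k : Rabs (exp (INR n) - G n k) <= ee n k.
Proof.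
  set (X := INR n).
  assert (HX : 1 <= X) by (unfold X; apply (le_INR 1); lia).
  apply Rle_plus_epsilon. intros eps Heps.
  destruct (E1_cvg X (eps/3)) as [N0 HN0]; [lra|].
  destruct (cv_speed_pow_fact X (eps/(3*X))) as [N1 HN1].
  { apply Rdiv_lt_0_compat; lra. }
  set (j := (k + (N0 + N1))%nat).
  pose proof (tele n hn k (N0 + N1)) as T. fold j in T.
  pose proof (ee_pos n j).
  specialize (HN0 (n + j)%nat ltac:(unfold j; lia)).
  specialize (HN1 (n + j)%nat ltac:(unfold j; lia)).
  unfold R_dist in HN0, HN1. rewrite Rminus_0_r in HN1.
  apply Rabs_def2 in HN0. apply Rabs_def2 in HN1. destruct HN0 as [HN0a HN0b]. destruct HN1 as [HN1a HN1b].
  assert (HE : E1 X (n + j) = sum_f_R0 (fun i => X ^ i / INR (fact i)) (n + j)).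
  { unfold E1. apply sum_eq. intros i _. unfold Rdiv. ring. }
  assert (HR0 : 0 <= X ^ (n + j + 1) / ((INR j + 1) * INR (fact (n + j)))).
  { pose proof (pos_INR j). pose proof (INR_fact_lt_0 (n+j)).
    apply Rmult_le_pos; [apply pow_le; lra|].
    apply Rlt_le, Rinv_0_lt_compat. nra. }
  assert (HR1 : X ^ (n + j + 1) / ((INR j + 1) * INR (fact (n + j))) <= X * (X ^ (n + j) / INR (fact (n + j)))).
  { pose proof (pos_INR j). pose proof (INR_fact_lt_0 (n+j)).
    rewrite pow_add. simpl pow.
    assert (0 <= X ^ (n+j)) by (apply pow_le; lra).
    unfold Rdiv. rewrite Rinv_mult.
    assert (0 < / (INR j + 1) <= 1).
    { split. apply Rinv_0_lt_compat; lra.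
      rewrite <- Rinv_1. apply Rinv_le_contravar; lra. }
    assert (0 < / INR (fact (n + j))) by (apply Rinv_0_lt_compat; lra).
    assert (0 <= X ^ (n + j) * X * / INR (fact (n + j))).
    { apply Rmult_le_pos; [|lra]. nra. }
    match goal with |- ?L <= ?R' =>
      replace L with ((X ^ (n + j) * X * / INR (fact (n + j))) * / (INR j + 1)) by ring;
      replace R' with ((X ^ (n + j) * X * / INR (fact (n + j))) * 1) by ring end.
    apply Rmult_le_compat_l; lra. }
  assert (HR2 : X * (X ^ (n + j) / INR (fact (n + j))) < eps / 3).
  { replace (eps / 3) with (X * (eps / (3 * X))) by (field; lra).
    apply Rmult_lt_compat_l; [lra|exact HN1a]. }
  assert (HG : G n j = sum_f_R0 (fun i => X ^ i / INR (fact i)) (n + j)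
     + X ^ (n + j + 1) / ((INR j + 1) * INR (fact (n + j)))) by reflexivity.
  apply Rabs_le. lra.
Qed.

Lemma ee_eq n (hn : (0 < n)%nat) k :
  ee n k = ((INR n + 1) * INR n ^ (n + 1) / INR (fact (n - 1))) *
    (INR n ^ (k + 1) / (INR (k + 1) * INR (k + 2) * poch (INR n) (k + 2))).
Proof.
  destruct n as [|n']; [lia|].
  replace (S n' - 1)%nat with n' by lia.
  unfold ee.
  replace (S n' + k + 1)%nat with (n' + (k + 2))%nat by lia.
  rewrite fact_poch.
  replace (INR n' + 1) with (INR (S n')) by (rewrite S_INR; ring).
  set (X := INR (S n')).
  assert (HX : 0 < X) by (unfold X; apply lt_0_INR; lia).
  replace (n' + (k + 2))%nat with (S n' + k + 1)%nat by lia.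
  rewrite !pow_add. rewrite !plus_INR. simpl INR.
  pose proof (INR_fact_neq_0 n'). pose proof (poch_pos X (k + 2) HX).
  pose proof (pos_INR k).
  simpl pow. field. repeat split; lra.
Qed.

Theorem corollary2p5 (n : nat) (hn : (0 < n)%nat) :
  exists (M : R) (K : nat), forall k : nat, (K <= k)%nat ->
    Rabs (exp (INR n) - Capprox n k)
      <= M * (INR n ^ (k + 1)
              / (INR (k + 1) * INR (k + 2) * poch (INR n) (k + 2))).
Proof.
  exists ((INR n + 1) * INR n ^ (n + 1) / INR (fact (n - 1))), 0%nat.
  intros k _.
  rewrite Capprox_G by exact hn. rewrite <- ee_eq by exact hn.
  apply main_bound; exact hn.
Qed.
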